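(* Let $A\in M_m(R)$ be non-singular with $m\in\{2,3\}$, and write $f_A(x)=\sum_{k=0}^m a_kx^k$, $f_{A^\nabla}(x)=\sum_{k=0}^m b_kx^k$. Then $\det(A)f_{A^\nabla}(x)\models_{gs}x^mf_A(x^{-1})$, i.e. $\det(A)b_k\models_{gs}a_{m-k}$ for all $k$, and when $m=2$ equality $\det(A)f_{A^\nabla}(x)=x^2f_A(x^{-1})$ holds.
   Context: Supertropical semiring $R=T\cup G\cup\{-\infty\}$: $T=\mathcal G$ an ordered abelian group (tangible), $G=\{a^\nu\}$ a copy (ghost); $a+b$ is the element of larger $\nu$-value if the $\nu$-values differ and $a^\nu$ if equal; multiplication adds $\nu$-values, is ghost if a factor is ghost, $-\infty$ absorbing; $0_R=-\infty$, $1_R=0$. Ghost surpassing: $a\models_{gs}b$ iff $a=b$, or $a\in G$ with $\nu$-value of $a$ $\geq$ that of $b$; for polynomials it is coefficientwise. $\det(A)=\sum_{\sigma}\prod_i a_{i,\sigma(i)}$; non-singular iff $\det(A)\in T$; $\operatorname{adj}(A)_{i,j}=\det(A_{j,i})$; $A^\nabla=\det(A)^{-1}\operatorname{adj}(A)$. $f_M(x)=\det(xI+M)$ has $x^k$-coefficient the sum of determinants of all $(m-k)\times(m-k)$ principal submatrices of $M$; $x^mf_A(x^{-1})$ denotes $\sum_{k=0}^m a_{m-k}x^k$. *)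

(* Defs.v *)
From HB Require Import structures.
From mathcomp Require Import all_boot all_order all_algebra all_fingroup.
Set Implicit Arguments. Unset Strict Implicit. Unset Printing Implicit Defensive.
Import GRing.Theory.
Local Open Scope ring_scope.

Definition ordered_group (G : zmodType) (le : rel G) : Prop :=
  [/\ (forall a, le a a),
      (forall a b, le a b -> le b a -> a = b),
      (forall a b c, le a b -> le b c -> le a c),
      (forall a b, le a b || le b a)
    & (forall a b c, le a b -> le (a + c) (b + c))].

(* Supertropical semiring R = T ∪ G ∪ {-oo}: Tan a (tangible), Gh a = a^nu (ghost). *)
Inductive stropical (G : Type) : Type :=
  | NegInf : stropical G
  | Tan : G -> stropical G
  | Gh : G -> stropical G.
Arguments NegInf {G}.

Section Supertropical.
Variables (G : zmodType) (le : rel G).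

(* nu-value of a non-(-oo) element *)
Definition stval (x : stropical G) : G :=
  match x with NegInf => 0 | Tan a => a | Gh a => a end.

Definition stadd (x y : stropical G) : stropical G :=
  match x, y with
  | NegInf, _ => y
  | _, NegInf => x
  | _, _ => let a := stval x in let b := stval y in
            if a == b then Gh a else if le a b then y else x
  end.

Definition stmul (x y : stropical G) : stropical G :=
  match x, y with
  | NegInf, _ => NegInf
  | _, NegInf => NegInf
  | Tan a, Tan b => Tan (a + b)
  | _, _ => Gh (stval x + stval y)
  end.

Definition stone : stropical G := Tan 0.

(* inverse of a tangible element (used only for tangible det) *)
Definition stinv (x : stropical G) : stropical G :=
  match x with NegInf => NegInf | Tan a => Tan (- a) | Gh a => Gh (- a) end.

Definition tangible (x : stropical G) : bool :=
  if x is Tan _ then true else false.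

Definition gs (x y : stropical G) : Prop :=
  x = y \/ exists g, x = Gh g /\
    match y with NegInf => True | Tan h => le h g | Gh h => le h g end.

Definition stdet (n : nat) (A : 'M[stropical G]_n) : stropical G :=
  \big[stadd/NegInf]_(s : 'S_n) \big[stmul/stone]_(i < n) A i (s i).

Definition stadj (n : nat) (A : 'M[stropical G]_n) : 'M[stropical G]_n :=
  \matrix_(i, j) stdet (row' j (col' i A)).

Definition stnabla (n : nat) (A : 'M[stropical G]_n) : 'M[stropical G]_n :=
  \matrix_(i, j) stmul (stinv (stdet A)) (stadj A i j).

Definition principal_sub (n : nat) (M : 'M[stropical G]_n) (S : {set 'I_n})
  : 'M[stropical G]_#|S| :=
  \matrix_(i, j) M (enum_val i) (enum_val j).

(* x^k-coefficient of f_M(x) = det(xI + M): the sum of the determinants of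
   all (n-k)x(n-k) principal submatrices of M *)
Definition charcoef (n : nat) (M : 'M[stropical G]_n) (k : nat) : stropical G :=
  \big[stadd/NegInf]_(S : {set 'I_n} | #|S| == (n - k)%N) stdet (principal_sub M S).

End Supertropical.

(* Main.v *)
From HB Require Import structures.
Require Import Defs.
From mathcomp Require Import all_boot all_order all_algebra all_fingroup.
From Stdlib Require Import Ring.
From mathcomp Require Import zify.
Set Implicit Arguments. Unset Strict Implicit. Unset Printing Implicit Defensive.
Import GRing.Theory.
Local Open Scope ring_scope.

Section Alg.
Variables (G : zmodType) (le : rel G) (HG : ordered_group le).

Implicit Types (x y z : stropical G) (a b c : G).
Local Notation "x +s y" := (stadd le x y) (at level 50, left associativity).
Local Notation "x *s y" := (stmul x y) (at level 40, left associativity).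

Definition lt (a b : G) := le a b && (a != b).

Lemma le_refl a : le a a. Proof. by case: HG. Qed.
Lemma le_anti a b : le a b -> le b a -> a = b. Proof. by move: HG => [_ h _ _ _]; apply: h. Qed.
Lemma le_trans a b c : le a b -> le b c -> le a c. Proof. by move: HG => [_ _ h _ _]; apply: h. Qed.
Lemma le_total a b : le a b || le b a. Proof. by case: HG. Qed.
Lemma le_add a b c : le a b -> le (a + c) (b + c). Proof. by move: HG => [_ _ _ _ h]; apply: h. Qed.
Lemma le_addE a b c : le (a + c) (b + c) = le a b.
Proof.
apply/idP/idP; last exact: le_add.
by move/(le_add (- c)); rewrite !addrK.
Qed.
Lemma le_addlE a b c : le (c + a) (c + b) = le a b.
Proof. by rewrite ![c + _]addrC le_addE. Qed.

Variant tri_spec (a b : G) : bool -> bool -> bool -> bool -> Prop :=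
| TriEq of a = b : tri_spec a b true true true true
| TriLt of a <> b & le a b : tri_spec a b false false true false
| TriGt of b <> a & le b a : tri_spec a b false false false true.

Lemma triP a b : tri_spec a b (a == b) (b == a) (le a b) (le b a).
Proof.
case: (eqVneq a b) => [->|ne]; first by rewrite le_refl; constructor.
have := le_total a b; case ab: (le a b); case ba: (le b a) => //= _.
- by rewrite (le_anti ab ba) eqxx in ne.
- by constructor=> //; apply/eqP.
- by constructor=> //; apply/eqP; rewrite eq_sym.
Qed.

Lemma lt_trans_contra a b c : le a b -> le b c -> le c a -> a <> b -> False.
Proof. move=> ab bc ca nab; apply: nab; apply: le_anti ab (le_trans bc ca). Qed.

Ltac contra := exfalso; match goal with
 | H1 : is_true (le ?x ?y), H2 : is_true (le ?y ?x), H3 : ?x <> ?y |- _ => apply: H3; exact: le_anti H1 H2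
 | H1 : is_true (le ?x ?y), H2 : is_true (le ?y ?z), H3 : is_true (le ?z ?x), H4 : ?x <> ?y |- _ => exact: lt_trans_contra H1 H2 H3 H4
 end.
Ltac tri a b := case: (triP a b) => [?|? ?|? ?]; [subst; rewrite /= ?eqxx ?le_refl | | ]; try done; try (match goal with H : ?x <> ?x |- _ => by case: H end).
Ltac step := match goal with |- context [?a == ?b] => tri a b | |- context[le ?a ?b] => tri a b end; simpl.

Lemma addC x y : x +s y = y +s x.
Proof.
case: x => [|a|a]; case: y => [|b|b] //=; repeat (step; try done); try contra.

Qed.

Lemma add0s x : NegInf +s x = x. Proof. by []. Qed.
Lemma adds0 x : x +s NegInf = x. Proof. by case: x. Qed.

Lemma addA x y z : x +s (y +s z) = x +s y +s z.
Proof.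
case: x => [|a|a]; case: y => [|b|b]; case: z => [|c|c] //=;
  rewrite ?adds0 //; repeat (step; try done); try contra.
Qed.

Lemma eq_addr (a b c : G) : (a + c == b + c) = (a == b).
Proof. exact: (inj_eq (@addIr G c)). Qed.

Lemma mulC x y : x *s y = y *s x.
Proof. by case: x => [|a|a]; case: y => [|b|b] //=; rewrite addrC. Qed.
Lemma mulA x y z : x *s (y *s z) = x *s y *s z.
Proof. by case: x => [|a|a]; case: y => [|b|b]; case: z => [|c|c] //=; rewrite addrA. Qed.
Lemma mul1s x : stone G *s x = x.
Proof. by case: x => [|a|a] //=; rewrite add0r. Qed.
Lemma mul0s x : NegInf *s x = NegInf. Proof. by []. Qed.
Lemma muls0 x : x *s NegInf = NegInf. Proof. by case: x. Qed.

Lemma distrl x y z : (x +s y) *s z = x *s z +s y *s z.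
Proof.
case: z => [|c|c]; first by rewrite !muls0.
all: case: x => [|a|a]; case: y => [|b|b] //=; rewrite ?eq_addr ?le_addE;
  repeat (step; try done); try contra.
Qed.

Definition st_srth : semi_ring_theory NegInf (stone G) (stadd le) (@stmul G) (@eq _).
Proof.
constructor.
- exact: add0s.
- exact: addC.
- exact: addA.
- exact: mul1s.
- exact: mul0s.
- exact: mulC.
- exact: mulA.
- exact: distrl.
Qed.

Add Ring stRing : st_srth.

Lemma test_ring (x y : stropical G) : (x +s y) *s (x +s y) = x *s x +s (x *s y +s y *s x) +s y *s y.
Proof. ring. Qed.


Definition ub g y := match y with NegInf => True | Tan h => le h g | Gh h => le h g end.

Lemma gsE x y : gs le x y <-> x = y \/ exists g, x = Gh g /\ ub g y.
Proof. by []. Qed.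

Ltac le_solve := first [ assumption | exact: le_refl | by apply: le_trans; eassumption
  | by apply: le_trans; [eassumption|]; apply: le_trans; eassumption ].
Ltac gs_fin := rewrite ?gsE /ub; first [ by left | by right; eexists; split; [reflexivity | le_solve] | by []].

Lemma gs_refl x : gs le x x. Proof. by left. Qed.

Lemma gs_trans x y z : gs le x y -> gs le y z -> gs le x z.
Proof.
move=> [->//|[g [-> hg]]] [<-|[h [ey hh]]]; first by right; exists g.
subst y; right; exists g; split=> //; case: z hh => //= c hc; exact: le_trans hc hg.
Qed.

Lemma gs_add1 g y y' : ub g y' -> gs le (y +s Gh g) (y +s y').
Proof.
case: y => [|a|a]; case: y' => [|b|b] /= hb; repeat (step; try done); try contra; try gs_fin.
Qed.

Lemma gs_add x x' y y' : gs le x y -> gs le x' y' -> gs le (x +s x') (y +s y').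
Proof.
move=> hx hx'; apply: (@gs_trans _ (y +s x')).
- case: hx => [->|[g [-> hg]]]; first exact: gs_refl.
  by rewrite (addC (Gh g)) (addC y); apply: gs_add1.
- case: hx' => [->|[g [-> hg]]]; first exact: gs_refl.
  exact: gs_add1.
Qed.

Lemma gs_mul (c : stropical G) x y : gs le x y -> gs le (c *s x) (c *s y).
Proof.
case=> [->|[g [-> hg]]]; first exact: gs_refl.
case: c => [|k|k]; first by left.
all: right; eexists; split; first reflexivity.
all: by case: y hg => [|h|h] //= hg; rewrite le_addlE.
Qed.

Lemma gs_ghost x t : gs le (x +s (t +s t)) x.
Proof.
have -> : t +s t = if t is NegInf then NegInf else Gh (stval t).
  by case: t => [|a|a] //=; rewrite eqxx.
case: t => [|a|a]; first by rewrite adds0; exact: gs_refl.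
all: by rewrite -{2}(adds0 x); apply: gs_add1.
Qed.

Lemma distrr z x y : z *s (x +s y) = z *s x +s z *s y.
Proof. by rewrite !(mulC z) distrl. Qed.

HB.instance Definition _ := Monoid.isComLaw.Build (stropical G) NegInf (stadd le) addA addC add0s.
HB.instance Definition _ := Monoid.isComLaw.Build (stropical G) (stone G) (@stmul G) mulA mulC mul1s.
HB.instance Definition _ := Monoid.isMulLaw.Build (stropical G) NegInf (@stmul G) mul0s muls0.
HB.instance Definition _ := Monoid.isAddLaw.Build (stropical G) (@stmul G) (stadd le) distrl distrr.

Lemma test2 (I : finType) (F : I -> stropical G) (c : stropical G) :
  c *s \big[stadd le/NegInf]_(i : I) F i = \big[stadd le/NegInf]_i (c *s F i).
Proof. by rewrite big_distrr. Qed.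
Lemma det_expand n (B : 'M[stropical G]_n.+1) :
  stdet le B = \big[stadd le/NegInf]_(j < n.+1) (B ord0 j *s stdet le (row' ord0 (col' j B))).
Proof.
rewrite /stdet (partition_big (fun s : 'S_n.+1 => s ord0) predT) //=.
apply: eq_bigr => j0 _.
rewrite big_distrr /=.
rewrite (reindex (lift_perm ord0 j0)); last first.
  pose ulsf i (s : 'S_n.+1) k := odflt k (unlift (s i) (s (lift i k))).
  have ulsfK i (s : 'S_n.+1) k: lift (s i) (ulsf i s k) = s (lift i k).
    rewrite /ulsf; have:= neq_lift i k.
    by rewrite -(can_eq (permK s)) => /unlift_some[] ? ? ->.
  have inj_ulsf: injective (ulsf ord0 _).
    move=> s; apply: can_inj (ulsf (s ord0) s^-1%g) _ => k'.
    by rewrite {1}/ulsf ulsfK !permK liftK.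
  exists (fun s => perm (inj_ulsf s)) => [s _ | s].
    by apply/permP=> k'; rewrite permE /ulsf lift_perm_lift lift_perm_id liftK.
  move/(s _ =P _) => si0; apply/permP=> k.
  case: (unliftP ord0 k) => [k'|] ->; rewrite ?lift_perm_id //.
  by rewrite lift_perm_lift -si0 permE ulsfK.
apply: eq_big => [s | s _]; first by rewrite lift_perm_id eqxx.
rewrite big_ord_recl lift_perm_id; congr (_ *s _).
by apply: eq_bigr => k _; rewrite !mxE lift_perm_lift.
Qed.
Lemma sdet0 (B : 'M[stropical G]_0) : stdet le B = stone G.
Proof.
rewrite /stdet (big_pred1 1%g) ?big_ord0 // => s.
by apply/esym/eqP/permP => -[].
Qed.

Definition en n (B : 'M[stropical G]_n.+1) (i j : nat) : stropical G := B (inord i) (inord j).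

Ltac idx := rewrite /en; repeat f_equal; apply/val_inj; rewrite /= ?inordK //.

Lemma sdet1 (B : 'M[stropical G]_1) : stdet le B = en B 0 0.
Proof.
rewrite det_expand big_ord_recl big_ord0 adds0 sdet0 mulC mul1s.
idx.
Qed.

Lemma sdet2 (B : 'M[stropical G]_2) : stdet le B = en B 0 0 *s en B 1 1 +s en B 0 1 *s en B 1 0.
Proof.
rewrite det_expand !big_ord_recl big_ord0 adds0 !sdet1 /en !mxE.
idx.
Qed.

Lemma sdet3 (B : 'M[stropical G]_3) : stdet le B =
  en B 0 0 *s (en B 1 1 *s en B 2 2 +s en B 1 2 *s en B 2 1) +s
  (en B 0 1 *s (en B 1 0 *s en B 2 2 +s en B 1 2 *s en B 2 0) +s
   en B 0 2 *s (en B 1 0 *s en B 2 1 +s en B 1 1 *s en B 2 0)).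
Proof.
rewrite det_expand !big_ord_recl big_ord0 adds0 !sdet2 /en !mxE.
idx.
Qed.

Lemma sum_card0 n (F : {set 'I_n} -> stropical G) :
  \big[stadd le/NegInf]_(S : {set 'I_n} | #|S| == 0%N) F S = F set0.
Proof.
rewrite (big_pred1 set0) // => S; by rewrite /= cards_eq0.
Qed.

Lemma sum_cardT n (F : {set 'I_n} -> stropical G) :
  \big[stadd le/NegInf]_(S : {set 'I_n} | #|S| == n) F S = F setT.
Proof.
rewrite (big_pred1 setT) // => S /=.
have hS : (#|S| <= n)%N by have := max_card (mem S); rewrite card_ord.
by rewrite eqEcard subsetT cardsT card_ord /= eqn_leq hS.
Qed.

Lemma sum_cardC n r (F : {set 'I_n} -> stropical G) : (r <= n)%N ->
  \big[stadd le/NegInf]_(S : {set 'I_n} | #|S| == r) F S =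
  \big[stadd le/NegInf]_(S : {set 'I_n} | #|S| == (n - r)%N) F (~: S).
Proof.
move=> rn; rewrite (reindex_inj (@setC_inj _)); apply: eq_bigl => S /=.
have := cardsC S; rewrite card_ord.
move: #|S| #|~: S| => a b hab; apply/eqP/eqP; lia.
Qed.

Lemma det_cast n n' (e : n = n') (B : 'M[stropical G]_n) :
  stdet le B = stdet le (castmx (e, e) B).
Proof. by subst; rewrite castmx_id. Qed.

Lemma pdet0 n (M : 'M[stropical G]_n) : stdet le (principal_sub M set0) = stone G.
Proof. by rewrite (det_cast (cards0 _)) sdet0. Qed.

Lemma pdet1 n (M : 'M[stropical G]_n) (S : {set 'I_n}) : #|S| = 1%N ->
  exists x : 'I_n, x \in S /\ stdet le (principal_sub M S) = M x x.
Proof.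
move=> e; rewrite (det_cast e) sdet1 /en castmxE mxE.
eexists; split; last reflexivity; exact: enum_valP.
Qed.

Lemma pdet2 n (M : 'M[stropical G]_n) (S : {set 'I_n}) : #|S| = 2%N ->
  exists x y : 'I_n, [/\ x \in S, y \in S, x != y &
   stdet le (principal_sub M S) = M x x *s M y y +s M x y *s M y x].
Proof.
move=> e; rewrite (det_cast e) sdet2 /en !castmxE !mxE.
set x := enum_val _; set y := enum_val _.
exists x, y; split; try apply: enum_valP; last by [].
rewrite /x /y (inj_eq enum_val_inj) (inj_eq (@cast_ord_inj _ _ _)).
by rewrite -(inj_eq val_inj) /= !inordK.
Qed.

Lemma pdet3 n (M : 'M[stropical G]_n) (S : {set 'I_n}) : #|S| = 3%N ->
  exists x y z : 'I_n, [/\ x \in S, y \in S, z \in S, [/\ x != y, x != z & y != z] &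
   stdet le (principal_sub M S) =
  M x x *s (M y y *s M z z +s M y z *s M z y) +s
  (M x y *s (M y x *s M z z +s M y z *s M z x) +s
   M x z *s (M y x *s M z y +s M y y *s M z x))].
Proof.
move=> e; rewrite (det_cast e) sdet3 /en !castmxE !mxE.
set x := enum_val (cast_ord _ (inord 0)); set y := enum_val (cast_ord _ (inord 1)).
set z := enum_val (cast_ord _ (inord 2)).
exists x, y, z; split; try apply: enum_valP; last by [].
by rewrite /x /y /z !(inj_eq enum_val_inj) !(inj_eq (@cast_ord_inj _ _ _)) 
  -!(inj_eq val_inj) /= !inordK.
Qed.
Lemma inord3E (a b : nat) : (a < 3)%N -> (b < 3)%N -> (inord a == inord b :> 'I_3) = (a == b).
Proof. by move=> ha hb; rewrite -(inj_eq val_inj) /= !inordK. Qed.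
Lemma inord2E (a b : nat) : (a < 2)%N -> (b < 2)%N -> (inord a == inord b :> 'I_2) = (a == b).
Proof. by move=> ha hb; rewrite -(inj_eq val_inj) /= !inordK. Qed.

Lemma ord3 (x : 'I_3) : x = inord 0 \/ x = inord 1 \/ x = inord 2.
Proof.
case: x => [[|[|[|p]]] hp]; [left|right; left|right; right|by []];
  by apply/val_inj; rewrite /= inordK.
Qed.
Lemma ord2 (x : 'I_2) : x = inord 0 \/ x = inord 1.
Proof.
case: x => [[|[|p]] hp]; [left|right|by []]; by apply/val_inj; rewrite /= inordK.
Qed.

Lemma en_mx n (B : 'M[stropical G]_n.+1) (x y : 'I_n.+1) : B x y = en B x y.
Proof. by rewrite /en !inord_val. Qed.

Lemma pdet_set1 n (M : 'M[stropical G]_n) (i : 'I_n) :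
  stdet le (principal_sub M [set i]) = M i i.
Proof. by have [x [/set1P -> ->]] := pdet1 M (cards1 i). Qed.

Ltac o3 x := have [->|[->|->]] := ord3 x.
Ltac o2 x := have [->|->] := ord2 x.

Lemma pdetC3 (M : 'M[stropical G]_3) (i : nat) : (i < 3)%N ->
  stdet le (principal_sub M [set~ inord i]) =
  if i == 0%N then en M 1 1 *s en M 2 2 +s en M 1 2 *s en M 2 1
  else if i == 1%N then en M 0 0 *s en M 2 2 +s en M 0 2 *s en M 2 0
  else en M 0 0 *s en M 1 1 +s en M 0 1 *s en M 1 0.
Proof.
move=> hi.
have hc : #|[set~ (inord i : 'I_3)]| = 2%N by rewrite cardsC1 card_ord.
have [x [y [hx hy hxy ->]]] := pdet2 M hc; clear hc.
move: hx hy hxy; rewrite !in_setC1 !en_mx.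
o3 x; o3 y; rewrite ?inord3E //; rewrite !inordK //;
  case: i hi => [|[|[|i]]] //= _ _ _ _; ring.
Qed.

Lemma cc3_3 (M : 'M[stropical G]_3) : charcoef le M 3 = stone G.
Proof. by rewrite /charcoef subnn sum_card0 pdet0. Qed.

Lemma cc3_2 (M : 'M[stropical G]_3) : charcoef le M 2 = en M 0 0 +s (en M 1 1 +s en M 2 2).
Proof.
rewrite /charcoef (_ : (3 - 2 = 1)%N) // big_cards1 !big_ord_recl big_ord0 /=.
by rewrite adds0 !pdet_set1 !en_mx.
Qed.

Lemma cc3_1 (M : 'M[stropical G]_3) : charcoef le M 1 =
  (en M 1 1 *s en M 2 2 +s en M 1 2 *s en M 2 1) +s
  ((en M 0 0 *s en M 2 2 +s en M 0 2 *s en M 2 0) +s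
   (en M 0 0 *s en M 1 1 +s en M 0 1 *s en M 1 0)).
Proof.
rewrite /charcoef (_ : (3 - 1 = 2)%N) // (sum_cardC _ (n := 3)) //.
rewrite (_ : (3 - 2 = 1)%N) // big_cards1 !big_ord_recl big_ord0 /= adds0.
have -> : (lift ord0 (lift ord0 ord0) : 'I_3) = inord 2 by apply/val_inj; rewrite /= inordK.
have -> : (lift ord0 ord0 : 'I_3) = inord 1 by apply/val_inj; rewrite /= inordK.
have -> : (ord0 : 'I_3) = inord 0 by apply/val_inj; rewrite /= inordK.
by rewrite !pdetC3.
Qed.

Lemma cc3_0 (M : 'M[stropical G]_3) : charcoef le M 0 =
  en M 0 0 *s (en M 1 1 *s en M 2 2 +s en M 1 2 *s en M 2 1) +s
  (en M 0 1 *s (en M 1 0 *s en M 2 2 +s en M 1 2 *s en M 2 0) +s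
   en M 0 2 *s (en M 1 0 *s en M 2 1 +s en M 1 1 *s en M 2 0)).
Proof.
rewrite /charcoef subn0 sum_cardT.
have hc : #|[set: 'I_3]| = 3%N by rewrite cardsT card_ord.
have [x [y [z [_ _ _ [hxy hxz hyz] ->]]]] := pdet3 M hc.
move: hxy hxz hyz; rewrite !en_mx.
o3 x; o3 y; o3 z; rewrite ?inord3E //; rewrite !inordK // => _ _ _; ring.
Qed.

Lemma cc2_2 (M : 'M[stropical G]_2) : charcoef le M 2 = stone G.
Proof. by rewrite /charcoef subnn sum_card0 pdet0. Qed.

Lemma cc2_1 (M : 'M[stropical G]_2) : charcoef le M 1 = en M 0 0 +s en M 1 1.
Proof.
rewrite /charcoef (_ : (2 - 1 = 1)%N) // big_cards1 !big_ord_recl big_ord0 /= adds0 !pdet_set1.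
by rewrite !en_mx.
Qed.

Lemma cc2_0 (M : 'M[stropical G]_2) : charcoef le M 0 =
  en M 0 0 *s en M 1 1 +s en M 0 1 *s en M 1 0.
Proof.
rewrite /charcoef subn0 sum_cardT.
have hc : #|[set: 'I_2]| = 2%N by rewrite cardsT card_ord.
have [x [y [_ _ hxy ->]]] := pdet2 M hc.
move: hxy; rewrite !en_mx.
o2 x; o2 y; rewrite ?inord2E //; rewrite !inordK // => _; ring.
Qed.
Lemma lift_inord n (a : 'I_n.+2) (p : nat) : (p < n.+1)%N ->
  lift a (inord p) = inord (bump a p).
Proof.
move=> hp; apply/val_inj; rewrite /= !inordK //.
have := ltn_ord a; rewrite /bump; case: leqP => /= _ h; lia.
Qed.

Lemma nabla3 (A : 'M[stropical G]_3) (i j : nat) : (i < 3)%N -> (j < 3)%N ->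
  en (stnabla le A) i j = stinv (stdet le A) *s
   (en A (bump j 0) (bump i 0) *s en A (bump j 1) (bump i 1) +s
    en A (bump j 0) (bump i 1) *s en A (bump j 1) (bump i 0)).
Proof.
move=> hi hj; rewrite /en !mxE sdet2 /en !mxE !lift_inord // !inordK //.
Qed.

Lemma nabla2 (A : 'M[stropical G]_2) (i j : nat) : (i < 2)%N -> (j < 2)%N ->
  en (stnabla le A) i j = stinv (stdet le A) *s en A (bump j 0) (bump i 0).
Proof.
move=> hi hj; rewrite /en !mxE sdet1 /en !mxE !lift_inord // !inordK //.
Qed.

Lemma inv_tan x : tangible x -> stinv x *s x = stone G.
Proof. by case: x => //= a _; rewrite addNr. Qed.
Ltac bumps := rewrite /bump /= ?add0n ?addn0 ?add1n.

Lemma main2 (A : 'M[stropical G]_2) : tangible (stdet le A) -> forall k, (k <= 2)%N ->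
  stdet le A *s charcoef le (stnabla le A) k = charcoef le A (2 - k).
Proof.
move=> hT k; set d := stdet le A; set u := stinv d.
have du : u *s d = stone G by exact: inv_tan.
have hd : d = en A 0 0 *s en A 1 1 +s en A 0 1 *s en A 1 0 by rewrite /d sdet2.
case: k => [|[|[|k]]] // _.
- rewrite cc2_0 cc2_2 !nabla2 //; bumps; rewrite -/d -/u.
  transitivity ((u *s d) *s (u *s d)); last by rewrite du mul1s.
  rewrite {3}hd; ring.
- rewrite cc2_1 (_ : (2 - 1 = 1)%N) // cc2_1 !nabla2 //; bumps; rewrite -/d -/u.
  match goal with |- _ = ?R => transitivity ((u *s d) *s R) end; last by rewrite du mul1s.
  ring.
- by rewrite cc2_2 subnn cc2_0 mulC mul1s hd.
Qed.
Lemma main3 (A : 'M[stropical G]_3) : tangible (stdet le A) -> forall k, (k <= 3)%N ->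
  gs le (stdet le A *s charcoef le (stnabla le A) k) (charcoef le A (3 - k)).
Proof.
move=> hT k; set d := stdet le A; set u := stinv d.
have du : u *s d = stone G by exact: inv_tan.
have hd : d = en A 0 0 *s (en A 1 1 *s en A 2 2 +s en A 1 2 *s en A 2 1) +s
  (en A 0 1 *s (en A 1 0 *s en A 2 2 +s en A 1 2 *s en A 2 0) +s
   en A 0 2 *s (en A 1 0 *s en A 2 1 +s en A 1 1 *s en A 2 0)) by rewrite /d sdet3.
case: k => [|[|[|[|k]]]] // _.
- rewrite cc3_0 subn0 cc3_3 !nabla3 //; bumps; rewrite -/d -/u.
  set D := (X in d = X) in hd.
  set Q := (en A 0 1 *s en A 0 2 *s en A 1 0 *s en A 1 1 *s en A 2 0 *s en A 2 2) +s (en A 0 0 *s en A 0 1 *s en A 1 0 *s en A 1 2 *s en A 2 1 *s en A 2 2) +s (en A 0 0 *s en A 0 2 *s en A 1 1 *s en A 1 2 *s en A 2 0 *s en A 2 1) +s (en A 0 1 *s en A 0 2 *s en A 1 0 *s en A 1 2 *s en A 2 0 *s en A 2 1) +s (en A 0 0 *s en A 0 1 *s en A 1 1 *s en A 1 2 *s en A 2 0 *s en A 2 2) +s (en A 0 0 *s en A 0 2 *s en A 1 0 *s en A 1 1 *s en A 2 1 *s en A 2 2).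
  match goal with |- gs le ?L _ =>
    have E : L = (u *s d) *s (u *s (u *s (D *s D +s (Q +s Q)))) by rewrite /D /Q; ring end.
  rewrite E.
  rewrite du mul1s.
  apply: (@gs_trans _ (u *s (u *s (D *s D)))).
    by do 2 apply: gs_mul; apply: gs_ghost.
  have -> : u *s (u *s (D *s D)) = (u *s D) *s (u *s D) by ring.
  by rewrite -hd du mul1s; apply: gs_refl.
- rewrite cc3_1 (_ : (3 - 1 = 2)%N) // cc3_2 !nabla3 //; bumps; rewrite -/d -/u.
  set D := (X in d = X) in hd.
  set T := en A 0 0 +s (en A 1 1 +s en A 2 2).
  set Q := en A 1 0 *s en A 0 1 *s en A 2 0 *s en A 0 2 +s en A 0 1 *s en A 1 0 *s en A 2 1 *s en A 1 2
     +s en A 0 2 *s en A 2 0 *s en A 1 2 *s en A 2 1.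
  match goal with |- gs le ?L _ =>
    have E : L = (u *s d) *s (u *s (D *s T +s (Q +s Q))) by rewrite /D /Q /T; ring end.
  rewrite E du mul1s.
  apply: (@gs_trans _ (u *s (D *s T))).
    by apply: gs_mul; apply: gs_ghost.
  have -> : u *s (D *s T) = (u *s D) *s T by ring.
  by rewrite -hd du mul1s; apply: gs_refl.
- left; rewrite cc3_2 (_ : (3 - 2 = 1)%N) // cc3_1 !nabla3 //; bumps; rewrite -/d -/u.
  match goal with |- _ = ?R => transitivity ((u *s d) *s R) end; last by rewrite du mul1s.
  ring.
- by left; rewrite cc3_3 subnn cc3_0 mulC mul1s hd.
Qed.
End Alg.

Theorem mainTheorem11 (G : zmodType) (le : rel G) (HG : ordered_group le)
  (m : nat) (Hm : m = 2%N \/ m = 3%N) (A : 'M[stropical G]_m)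
  (Hns : tangible (stdet le A)) :
  (forall k : nat, (k <= m)%N ->
     gs le (stmul (stdet le A) (charcoef le (stnabla le A) k))
           (charcoef le A (m - k)))
  /\ (m = 2%N -> forall k : nat, (k <= m)%N ->
     stmul (stdet le A) (charcoef le (stnabla le A) k) = charcoef le A (m - k)).
Proof.
case: Hm => em; subst m.
- split=> [k hk|_ k hk]; last exact: (main2 HG Hns hk).
  by left; exact: (main2 HG Hns hk).
- by split=> [k hk|//]; exact: (main3 HG Hns hk).
Qed.
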